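(* There exists $m_1>0$ with the following property. Let $f$ be a solution of $\frac{f''}{1+(f')^2}=\left(\frac r2-\frac{n-1}{r}\right)f'-\frac f2$ with $f(\sqrt{2(n-1)})>0$, and suppose $f'(r)>0$ and $f''(r)<0$ for all $r<\sqrt{2(n-1)}$ in its domain. Then $f(r)<0$ whenever $r<m_1$ and $f(r)$ is defined.
   Context: $n\ge2$ is a fixed integer; $f$ is a real function of $r>0$ defined on an interval containing $\sqrt{2(n-1)}$. *)

(* Defs.v *)
From Stdlib Require Import Reals.
From Coquelicot Require Import Coquelicot.
Open Scope R_scope.

Definition rstar (n : nat) : R := sqrt (2 * (INR n - 1)).

Definition in_dom (a : R) (b : Rbar) (r : R) : Prop := a < r /\ Rbar_lt r b.

Definition is_solution (n : nat) (a : R) (b : Rbar) (f f1 f2 : R -> R) : Prop :=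
  forall r, in_dom a b r ->
    is_derive f r (f1 r) /\ is_derive f1 r (f2 r) /\
    f2 r / (1 + (f1 r) ^ 2) = (r / 2 - (INR n - 1) / r) * f1 r - f r / 2.

(* Main.v *)
Require Import Defs.
From Stdlib Require Import Reals.
From Coquelicot Require Import Coquelicot.
From Stdlib Require Import Lra.
Open Scope R_scope.

Lemma alg (v g fv k E: R): 0<v -> v*v < 2*k -> 1 <= k -> 0<E -> 0<g -> 0<=fv ->
  E*(1-v^2/2)*g + v*E*((1+g^2)*((v/2 - k/v)*g - fv/2)) <= -(v*E*fv/2).
Proof.
intros.
replace (v*E*((1+g^2)*((v/2-k/v)*g - fv/2))) with (E*((1+g^2)*((v*v/2-k)*g - v*fv/2))) by (field; lra).
assert (g*(1-k) + g^3*(v*v/2 - k) - g^2*(v*fv)/2 <= 0).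
{ assert (0 <= g^2*(v*fv)) by (apply Rmult_le_pos; [nra| nra]).
  assert (g^3*(v*v/2-k) <= 0). { assert (0 < g^3) by (apply pow_lt; lra). nra. }
  nra. }
replace (E*(1-v^2/2)*g + E*((1+g^2)*((v*v/2-k)*g - v*fv/2))) with
  (E*(g*(1-k) + g^3*(v*v/2 - k) - g^2*(v*fv)/2) - v*E*fv/2) by field.
nra.
Qed.

Lemma mvt (h dh : R -> R) x y : x < y ->
  (forall t, x <= t <= y -> is_derive h t (dh t)) ->
  exists c, x < c < y /\ h y - h x = dh c * (y - x).
Proof.
intros Hxy Hd.
destruct (MVT_cor2 h dh x y Hxy) as [c [Hc1 Hc2]].
{ intros c Hc. apply is_derive_Reals. auto. }
exists c. auto.
Qed.

Lemma incr (h dh : R -> R) x y : x <= y ->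
  (forall t, x <= t <= y -> is_derive h t (dh t)) ->
  (forall t, x < t < y -> 0 <= dh t) -> h x <= h y.
Proof.
intros Hxy Hd Hp.
destruct (Rle_lt_or_eq_dec x y Hxy) as [H|H].
- destruct (mvt h dh x y H Hd) as [c [Hc Heq]].
  specialize (Hp c Hc). nra.
- subst. lra.
Qed.

Lemma dE v : is_derive (fun t => exp(-(t^2)/4)) v (-(v/2)*exp(-(v^2)/4)).
Proof.
auto_derive; [auto|].
replace (- (v * (v * 1)) * / 4) with (-(v^2)/4) by field.
field.
Qed.

Lemma dP v : is_derive (fun t => t*exp(-(t^2)/4)) v (exp(-(v^2)/4)*(1-v^2/2)).
Proof.
replace (exp(-(v^2)/4)*(1-v^2/2)) with (1*exp(-(v^2)/4) + v*(-(v/2)*exp(-(v^2)/4))) by field.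
apply (is_derive_mult (fun t => t) (fun t => exp(-(t^2)/4))).
- auto_derive; [auto| ring].
- apply dE.
- intros; apply Rmult_comm.
Qed.

Lemma dPsi v : is_derive (fun t => -2*exp(-(t^2)/4)) v (v*exp(-(v^2)/4)).
Proof.
replace (v*exp(-(v^2)/4)) with (-2 * (-(v/2)*exp(-(v^2)/4))) by field.
apply is_derive_scal. apply dE.
Qed.

Lemma dopp (h : R -> R) x dh : is_derive h x dh -> is_derive (fun t => - h t) x (- dh).
Proof. intro H. apply is_derive_Reals. apply is_derive_Reals in H.
exact (derivable_pt_lim_opp h x dh H). Qed.

Lemma dplus (h g : R -> R) x dh dg : is_derive h x dh -> is_derive g x dg ->
  is_derive (fun t => h t + g t) x (dh + dg).
Proof. intros H G. apply is_derive_Reals. apply is_derive_Reals in H. apply is_derive_Reals in G.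
exact (derivable_pt_lim_plus h g x dh dg H G). Qed.

Lemma dminus (h g : R -> R) x dh dg : is_derive h x dh -> is_derive g x dg ->
  is_derive (fun t => h t - g t) x (dh - dg).
Proof. intros H G. apply is_derive_Reals. apply is_derive_Reals in H. apply is_derive_Reals in G.
exact (derivable_pt_lim_minus h g x dh dg H G). Qed.

Theorem lemma2p6 (n : nat) (Hn : (2 <= n)%nat) :
  exists m1 : R, 0 < m1 /\
    forall (a : R) (b : Rbar) (f f1 f2 : R -> R),
      0 <= a ->
      in_dom a b (rstar n) ->
      is_solution n a b f f1 f2 ->
      f (rstar n) > 0 ->
      (forall r, in_dom a b r -> r < rstar n -> f1 r > 0 /\ f2 r < 0) ->
      forall r, in_dom a b r -> r < m1 -> f r < 0.
Proof.
set (s := rstar n).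
set (k := INR n - 1).
assert (Hk : 1 <= k).
{ unfold k. apply le_INR in Hn. simpl in Hn. lra. }
assert (Hs2 : s * s = 2 * k).
{ unfold s, rstar. fold k. apply sqrt_sqrt. lra. }
assert (Hs : 0 < s).
{ unfold s, rstar. fold k. apply sqrt_lt_R0. lra. }
set (Psi := fun v => -2 * exp (-(v^2)/4)).
set (k1 := (Psi (7*s/8) - Psi (3*s/4)) / 4).
set (k2 := 3/2 * exp (-(s^2)/4)).
set (kap := Rmin k1 k2).
assert (Hk1 : 0 < k1).
{ unfold k1, Psi.
  assert (exp (-(7*s/8)^2/4) < exp (-(3*s/4)^2/4)) by (apply exp_increasing; nra).
  lra. }
assert (Hk2 : 0 < k2) by (unfold k2; generalize (exp_pos (-(s^2)/4)); lra).
assert (Hkap : 0 < kap) by (unfold kap; apply Rmin_glb_lt; lra).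
exists (s/2 * exp (-(1/kap + 1))).
split.
{ generalize (exp_pos (-(1/kap + 1))). nra. }
intros a b f f1 f2 Ha Hsd Hsol HF Hsign r Hr Hrm.
destruct (Rlt_or_le (f r) 0) as [Hneg|Hr0]; [exact Hneg| exfalso].
assert (Hexp1 : exp (-(1/kap + 1)) < 1).
{ assert (0 < 1/kap) by (apply Rdiv_lt_0_compat; lra).
  assert (exp (-(1/kap + 1)) < exp 0) by (apply exp_increasing; lra).
  rewrite exp_0 in H0. exact H0. }
assert (Hrpos : 0 < r) by (destruct Hr; lra).
assert (Hm1 : s/2 * exp (-(1/kap + 1)) < s/2).
{ assert (0 < s/2) by lra.
  rewrite <- (Rmult_1_r (s/2)) at 2. apply Rmult_lt_compat_l; lra. }
assert (Hrs : r < s/2) by lra.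
assert (Hdom : forall v, r <= v <= s -> in_dom a b v).
{ intros v Hv. destruct Hr as [Hr1 _]. destruct Hsd as [_ Hsb]. split.
  - lra.
  - apply Rbar_le_lt_trans with (Finite s); [simpl; lra| exact Hsb]. }
assert (Hdf : forall v, r <= v <= s -> is_derive f v (f1 v)).
{ intros v Hv. apply (Hsol v (Hdom v Hv)). }
assert (Hdf1 : forall v, r <= v <= s -> is_derive f1 v (f2 v)).
{ intros v Hv. apply (Hsol v (Hdom v Hv)). }
assert (Hg : forall v, r <= v < s -> f1 v > 0 /\ f2 v < 0).
{ intros v Hv. apply Hsign; [apply Hdom; lra| lra]. }
assert (Hfmon : forall x y, r <= x <= y -> y <= s -> f x <= f y).
{ intros x y Hx Hy. apply (incr f f1); [lra| |].
  - intros t Ht. apply Hdf. lra.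
  - intros t Ht. destruct (Hg t) as [H1 _]; lra. }
assert (Heq : forall v, r <= v <= s ->
  f2 v = (1 + f1 v ^2) * ((v/2 - k/v) * f1 v - f v/2)).
{ intros v Hv. destruct (Hsol v (Hdom v Hv)) as [_ [_ He]].
  fold k in He.
  assert (0 < 1 + f1 v ^2) by (generalize (pow2_ge_0 (f1 v)); lra).
  rewrite <- He. field. lra. }
set (F := f s).
set (Phi := fun t => t * exp (-(t^2)/4) * f1 t).
set (dPhi := fun v => exp(-(v^2)/4)*(1-v^2/2)*f1 v + v*exp(-(v^2)/4)*f2 v).
assert (HdPhi : forall v, r <= v <= s -> is_derive Phi v (dPhi v)).
{ intros v Hv.
  assert (Hp : is_derive (fun t => t*exp(-(t^2)/4)) v (exp(-(v^2)/4)*(1-v^2/2))).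
  { apply dP. }
  unfold Phi, dPhi.
  replace (exp(-(v^2)/4)*(1-v^2/2)*f1 v + v*exp(-(v^2)/4)*f2 v) with
    (exp(-(v^2)/4)*(1-v^2/2) * f1 v + v*exp(-(v^2)/4) * f2 v) by ring.
  apply (is_derive_mult (fun t => t*exp(-(t^2)/4)) f1); auto.
  intros; apply Rmult_comm. }
assert (HdPhi_le : forall v, r <= v < s ->
  dPhi v <= -(v * exp(-(v^2)/4) * f v / 2)).
{ intros v Hv. unfold dPhi. rewrite (Heq v ltac:(lra)).
  destruct (Hg v Hv) as [Hg1 _].
  apply alg; try lra.
  - nra.
  - apply exp_pos.
  - generalize (Hfmon r v ltac:(lra) ltac:(lra)). lra. }
assert (HPhimon : forall x y, r <= x <= y -> y < s -> Phi y <= Phi x).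
{ intros x y Hx Hy.
  cut (- Phi x <= - Phi y); [lra|].
  apply (incr (fun t => - Phi t) (fun t => - dPhi t)); [lra| |].
  - intros t Ht. apply dopp. apply HdPhi. lra.
  - intros t Ht. generalize (HdPhi_le t ltac:(lra)).
    assert (0 <= t * exp (-(t^2)/4) * f t).
    { apply Rmult_le_pos; [apply Rmult_le_pos; [lra| apply Rlt_le, exp_pos]|].
      generalize (Hfmon r t ltac:(lra) ltac:(lra)). lra. }
    lra. }
assert (HFpos : 0 < F) by (unfold F; lra).
assert (Hkey : exists p, 3*s/4 <= p < s /\ kap * F <= Phi p).
{ destruct (Rlt_or_le (f (3*s/4)) (F/2)) as [Hc|Hc].
  - destruct (mvt f f1 (3*s/4) s ltac:(lra)) as [xi [Hxi Hm]].
    { intros t Ht. apply Hdf. lra. }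
    fold F in Hm.
    exists xi. split; [lra|].
    assert (Hgx : f1 xi > 2*F/s).
    { apply Rmult_lt_reg_r with (s/4); [lra|].
      replace (2*F/s*(s/4)) with (F/2) by (field; lra). lra. }
    assert (HE : exp (-(s^2)/4) <= exp (-(xi^2)/4)).
    { destruct (Rlt_or_le xi s); [apply Rlt_le, exp_increasing; nra| lra]. }
    unfold Phi.
    apply Rle_trans with (k2 * F); [apply Rmult_le_compat_r; [lra| apply Rmin_r]|].
    unfold k2.
    assert (0 < exp (-(s^2)/4)) by apply exp_pos.
    assert (3/2 * exp (-(s^2)/4) * F = (3*s/4) * exp (-(s^2)/4) * (2*F/s)) by (field; lra).
    rewrite H0.
    assert (0 < 2*F/s) by (apply Rdiv_lt_0_compat; lra).
    apply Rmult_le_compat; try nra.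
  - exists (3*s/4). split; [lra|].
    set (H := fun t => Phi t + F/4 * Psi t).
    assert (HH : H (7*s/8) <= H (3*s/4)).
    { cut (- H (3*s/4) <= - H (7*s/8)); [lra|].
      apply (incr (fun t => - H t) (fun t => - (dPhi t + F/4 * (t*exp(-(t^2)/4))))); [lra| |].
      - intros t Ht. apply dopp. unfold H. apply dplus.
        + apply HdPhi. lra.
        + apply is_derive_scal. unfold Psi. apply dPsi.
      - intros t Ht. generalize (HdPhi_le t ltac:(lra)).
        assert (F/2 <= f t) by (generalize (Hfmon (3*s/4) t ltac:(lra) ltac:(lra)); lra).
        assert (0 < t * exp (-(t^2)/4)) by (apply Rmult_lt_0_compat; [lra| apply exp_pos]).
        nra. }
    unfold H in HH.
    assert (0 < Phi (7*s/8)).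
    { unfold Phi. destruct (Hg (7*s/8) ltac:(lra)) as [Hg1 _].
      apply Rmult_lt_0_compat; [apply Rmult_lt_0_compat; [lra| apply exp_pos]| lra]. }
    apply Rle_trans with (k1 * F); [apply Rmult_le_compat_r; [lra| apply Rmin_l]|].
    unfold k1. lra. }
destruct Hkey as [p [Hp1 Hp2]].
assert (Hlow : forall u, r <= u <= s/2 -> kap * F <= u * f1 u).
{ intros u Hu.
  generalize (HPhimon u p ltac:(lra) ltac:(lra)). intro HP.
  assert (HPu : Phi u = u * exp (-(u^2)/4) * f1 u) by reflexivity.
  rewrite HPu in HP.
  destruct (Hg u ltac:(lra)) as [Hg1 _].
  assert (exp (-(u^2)/4) <= 1).
  { rewrite <- exp_0. destruct (Rlt_or_le 0 u); [apply Rlt_le, exp_increasing; nra| lra]. }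
  assert (0 < exp (-(u^2)/4)) by apply exp_pos.
  assert (0 <= (u * f1 u) * (1 - exp (-(u^2)/4))) by (apply Rmult_le_pos; nra).
  nra. }
assert (HG : f r - kap * F * ln r <= f (s/2) - kap * F * ln (s/2)).
{ apply (incr (fun t => f t - kap * F * ln t) (fun t => f1 t - kap * F * / t)); [lra| |].
  - intros t Ht. apply dminus.
    + apply Hdf. lra.
    + apply is_derive_scal. apply is_derive_ln. lra.
  - intros t Ht. generalize (Hlow t ltac:(lra)). intro Hl.
    assert (0 < t) by lra.
    assert (kap * F * / t <= f1 t).
    { apply Rmult_le_reg_l with t; [lra|].
      replace (t * (kap * F * / t)) with (kap * F) by (field; lra). lra. }
    lra. }
assert (Hfs2 : f (s/2) <= F) by (apply Hfmon; lra).
assert (Hln : ln r < ln (s/2) - (1/kap + 1)).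
{ replace (ln (s/2) - (1/kap + 1)) with (ln (s/2 * exp (-(1/kap + 1)))).
  - apply ln_increasing; lra.
  - rewrite ln_mult; [rewrite ln_exp; ring| lra| apply exp_pos]. }
assert (HkF : 0 < kap * F) by nra.
assert (kap * F * (ln (s/2) - ln r) > kap * F * (1/kap + 1)) by nra.
replace (kap * F * (1/kap + 1)) with (F + kap * F) in H by (field; lra).
nra.
Qed.
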